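(* Let $d\geq 2$ and let $\Lambda$ be any quantum channel (completely positive trace-preserving map) on $d\times d$ matrices. Let $|\Phi^{+}\rangle=\frac{1}{\sqrt d}\sum_{i=0}^{d-1}|ii\rangle\in\mathbb{C}^d\otimes\mathbb{C}^d$ and $\rho_{\Phi^+,\Lambda}=(\mathcal{I}\otimes\Lambda)(|\Phi^+\rangle\langle\Phi^+|)$. Then $$\mathbb{F}(\Lambda)\geq\lambda_{\max}(\rho_{\Phi^+,\Lambda}),$$ where $\lambda_{\max}$ denotes the largest eigenvalue.
   Context: For a pure state $|\psi\rangle\in\mathbb{C}^d\otimes\mathbb{C}^d$ and a channel $\Lambda$ acting on the second factor, $\rho_{\psi,\Lambda}=(\mathcal{I}\otimes\Lambda)(|\psi\rangle\langle\psi|)$. The singlet fraction of a two-qudit state $\rho$ is $\mathbb{F}(\rho)=\max_{|\Phi\rangle}\langle\Phi|\rho|\Phi\rangle$, the maximum over all maximally entangled states $|\Phi\rangle\in\mathbb{C}^d\otimes\mathbb{C}^d$. The maximum achievable singlet fraction is $\mathbb{F}^*(\rho)=\max_{L}\mathbb{F}(L(\rho))$, the maximum over all trace-preserving LOCC operations $L$ (local operations and classical communication between the two parties). The one-shot optimal singlet fraction of the channel is $\mathbb{F}(\Lambda)=\max_{|\psi\rangle}\mathbb{F}^*(\rho_{\psi,\Lambda})$, maximized over all pure states $|\psi\rangle\in\mathbb{C}^d\otimes\mathbb{C}^d$. *)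

(* Defs.v *)
From HB Require Import structures.
From mathcomp Require Import all_boot all_order all_algebra.
From mathcomp Require Import boolp classical_sets reals.
From mathcomp Require Export complex mxtens.

Set Implicit Arguments.
Unset Strict Implicit.
Unset Printing Implicit Defensive.

Import GRing.Theory Num.Theory.
Local Open Scope ring_scope.
Local Open Scope classical_set_scope.

(** Complex scalars are [R[i]] for a real field [R]; a vector in
    C^a (x) C^b is a column vector of size [a * b], the index of
    |i>|k> being [mxtens_index (i, k)] (the convention of [tensmx],
    the Kronecker product [A *t B]). *)

Definition adj {R : rcfType} {m n : nat} (A : 'M[R[i]]_(m, n)) : 'M[R[i]]_(n, m) :=
  (map_mx (@conjc R) A)^T.

(** positive semidefinite: <v|A|v> >= 0 (real and nonnegative) for all v *)
Definition psd {R : rcfType} {n : nat} (A : 'M[R[i]]_n) : Prop :=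
  forall v : 'cV[R[i]]_n, 0 <= (adj v *m A *m v) 0 0.

Definition block {R : rcfType} {a b : nat} (X : 'M[R[i]]_(a * b)) (i j : 'I_a)
  : 'M[R[i]]_b :=
  \matrix_(k, l) X (mxtens_index (i, k)) (mxtens_index (j, l)).

(** (I_k (x) Phi)(X) = sum_{i,j} |i><j| (x) Phi(<i|X|j>) *)
Definition id_tens {R : rcfType} {k m n : nat}
  (Phi : 'M[R[i]]_m -> 'M[R[i]]_n) (X : 'M[R[i]]_(k * m)) : 'M[R[i]]_(k * n) :=
  \sum_(i < k) \sum_(j < k) (delta_mx i j *t Phi (block X i j)).

Definition ptrace2 {R : rcfType} {a b : nat} (X : 'M[R[i]]_(a * b)) : 'M[R[i]]_a :=
  \matrix_(i, j) \tr (block X i j).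

Definition linear_map {R : rcfType} {m n : nat} (Phi : 'M[R[i]]_m -> 'M[R[i]]_n)
  : Prop :=
  forall (c : R[i]) (X Y : 'M[R[i]]_m), Phi (c *: X + Y) = c *: Phi X + Phi Y.

Definition completely_positive {R : rcfType} {m n : nat}
  (Phi : 'M[R[i]]_m -> 'M[R[i]]_n) : Prop :=
  forall (k : nat) (X : 'M[R[i]]_(k * m)), psd X -> psd (id_tens Phi X).

Definition trace_preserving {R : rcfType} {m n : nat}
  (Phi : 'M[R[i]]_m -> 'M[R[i]]_n) : Prop :=
  forall X : 'M[R[i]]_m, \tr (Phi X) = \tr X.

Definition channel {R : rcfType} {m n : nat} (Phi : 'M[R[i]]_m -> 'M[R[i]]_n)
  : Prop :=
  [/\ linear_map Phi, completely_positive Phi & trace_preserving Phi].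

Definition unit_vector {R : rcfType} {n : nat} (v : 'cV[R[i]]_n) : Prop :=
  (adj v *m v) 0 0 = 1.

(** maximally entangled pure states of C^d (x) C^d: the reduced state is
    maximally mixed (this forces the vector to be a unit vector) *)
Definition max_entangled {R : rcfType} (d : nat) (phi : 'cV[R[i]]_(d * d)) : Prop :=
  ptrace2 (phi *m adj phi) = ((d%:R : R[i])^-1)%:M.

Definition phiplus {R : rcfType} (d : nat) : 'cV[R[i]]_(d * d) :=
  ((Num.sqrt (d%:R : R))^-1)%:C%C *:
    \sum_(i < d) (delta_mx i (0 : 'I_1) *t delta_mx i (0 : 'I_1) : 'cV[R[i]]_(d * d)).

Definition rho_of {R : rcfType} {d : nat} (psi : 'cV[R[i]]_(d * d))
  (Lam : 'M[R[i]]_d -> 'M[R[i]]_d) : 'M[R[i]]_(d * d) :=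
  id_tens Lam (psi *m adj psi).

(** Trace-preserving LOCC operations (finitely many rounds) from
    C^a (x) C^b to C^a' (x) C^b'.  In each round one party performs a
    local measurement (instrument), given by Kraus operators
    K_1..K_n : C^a -> C^a0 with sum_j K_j^dag K_j = I (the local output
    dimension a0 is arbitrary), broadcasts the outcome j, and the protocol
    continues with an LOCC operation L_j depending on j.  The overall map is
    X |-> sum_j L_j((K_j (x) I) X (K_j (x) I)^dag) (outcomes are forgotten at
    the end). *)
Inductive LOCC (R : rcfType) :
  forall a b a' b' : nat, ('M[R[i]]_(a * b) -> 'M[R[i]]_(a' * b')) -> Prop :=
| LOCC_id (a b : nat) : LOCC (fun X : 'M[R[i]]_(a * b) => X)
| LOCC_Alice (a b a0 a' b' n : nat) (K : 'I_n -> 'M[R[i]]_(a0, a))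
    (L : 'I_n -> 'M[R[i]]_(a0 * b) -> 'M[R[i]]_(a' * b')) :
    \sum_(j < n) (adj (K j) *m K j) = 1%:M ->
    (forall j, LOCC (L j)) ->
    LOCC (fun X : 'M[R[i]]_(a * b) =>
      \sum_(j < n) L j ((K j *t (1%:M : 'M[R[i]]_b)) *m X
                          *m adj (K j *t (1%:M : 'M[R[i]]_b))))
| LOCC_Bob (a b b0 a' b' n : nat) (K : 'I_n -> 'M[R[i]]_(b0, b))
    (L : 'I_n -> 'M[R[i]]_(a * b0) -> 'M[R[i]]_(a' * b')) :
    \sum_(j < n) (adj (K j) *m K j) = 1%:M ->
    (forall j, LOCC (L j)) ->
    LOCC (fun X : 'M[R[i]]_(a * b) =>
      \sum_(j < n) L j (((1%:M : 'M[R[i]]_a) *t K j) *m X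
                          *m adj ((1%:M : 'M[R[i]]_a) *t K j))).

Definition singlet_fraction {R : realType} {d : nat} (rho : 'M[R[i]]_(d * d)) : R :=
  sup [set complex.Re ((adj phi *m rho *m phi) 0 0) | phi in @max_entangled R d].

Definition max_singlet_fraction {R : realType} {d : nat} (rho : 'M[R[i]]_(d * d)) : R :=
  sup [set singlet_fraction (L rho) | L in [set L | @LOCC R d d d d L]].

Definition channel_singlet_fraction {R : realType} {d : nat}
  (Lam : 'M[R[i]]_d -> 'M[R[i]]_d) : R :=
  sup [set max_singlet_fraction (rho_of psi Lam) | psi in @unit_vector R (d * d)].

(** largest eigenvalue (of a Hermitian matrix, whose eigenvalues are real) *)
Definition lambda_max {R : realType} {n : nat} (A : 'M[R[i]]_n) : R :=
  sup [set x : R | eigenvalue A (x%:C)%C].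

(* Main.v *)
Require Import Defs.
From HB Require Import structures.
From mathcomp Require Import all_boot all_order all_algebra.
From mathcomp Require Import boolp classical_sets reals.
From mathcomp Require Import complex mxtens.
From mathcomp Require Import ring lra.

Set Implicit Arguments.
Unset Strict Implicit.
Unset Printing Implicit Defensive.
Import Order.TTheory GRing.Theory Num.Theory.
Local Open Scope ring_scope.

Section Part1.
Variable R : realType.
Local Notation C := R[i].
Local Open Scope complex_scope.

Lemma conjE (x : C) : Num.conj x = conjc x. Proof. by []. Qed.

Lemma adjM m n p (A : 'M[C]_(m, n)) (B : 'M[C]_(n, p)) :
  adj (A *m B) = adj B *m adj A.
Proof. by rewrite /adj map_mxM trmx_mul. Qed.

Lemma adjK m n (A : 'M[C]_(m, n)) : adj (adj A) = A.
Proof. by apply/matrixP => i j; rewrite !mxE conjcK. Qed.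

Lemma adjD m n (A B : 'M[C]_(m, n)) : adj (A + B) = adj A + adj B.
Proof. by apply/matrixP => i j; rewrite !mxE rmorphD. Qed.

Lemma adjZ m n c (A : 'M[C]_(m, n)) : adj (c *: A) = (conjc c) *: adj A.
Proof. by apply/matrixP => i j; rewrite !mxE rmorphM. Qed.

Lemma adjT m n p q (A : 'M[C]_(m, n)) (B : 'M[C]_(p, q)) :
  adj (A *t B) = adj A *t adj B.
Proof. by apply/matrixP => i j; rewrite !mxE rmorphM. Qed.

Lemma adj1 n : adj (1%:M : 'M[C]_n) = 1%:M.
Proof. by apply/matrixP => i j; rewrite !mxE eq_sym rmorph_nat. Qed.

Lemma psd_conj n p (X : 'M[C]_n) (B : 'M[C]_(p, n)) :
  psd X -> psd (B *m X *m adj B).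
Proof.
move=> hX v; have := hX (adj B *m v).
by rewrite adjM adjK !mulmxA.
Qed.

Lemma psd0 n : psd (0 : 'M[C]_n).
Proof. by move=> v; rewrite mulmx0 mul0mx mxE. Qed.

Lemma psdD n (X Y : 'M[C]_n) : psd X -> psd Y -> psd (X + Y).
Proof.
by move=> hX hY v; rewrite mulmxDr mulmxDl mxE addr_ge0 //.
Qed.

Lemma psd_sum n I (r : seq I) (P : pred I) (F : I -> 'M[C]_n) :
  (forall i, P i -> psd (F i)) -> psd (\sum_(i <- r | P i) F i).
Proof.
move=> h; apply: (big_ind psd); [exact: psd0| exact: psdD| exact: h].
Qed.

Lemma psd1 : psd (1%:M : 'M[C]_1).
Proof.
move=> v; rewrite mulmx1 !mxE big_ord1 !mxE mulrC; exact: mulcJ_ge0.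
Qed.

Lemma psd_rank1 n (u : 'cV[C]_n) : psd (u *m adj u).
Proof. by have := psd_conj u psd1; rewrite mulmx1. Qed.

Lemma sum_tens (V : nmodType) a b (F : 'I_(a * b) -> V) :
  \sum_(m < a * b) F m = \sum_(i < a) \sum_(k < b) F (mxtens_index (i, k)).
Proof.
rewrite pair_big /= (reindex (@mxtens_index a b)) /=.
  by apply: eq_bigr => -[i k] _.
by exists (@mxtens_unindex a b) => m _; rewrite (mxtens_indexK, mxtens_unindexK).
Qed.

Lemma mxtens_index_inj a b : injective (@mxtens_index a b).
Proof. exact: can_inj (@mxtens_indexK a b). Qed.

Lemma tens11 a b : (1%:M : 'M[C]_a) *t (1%:M : 'M[C]_b) = 1%:M.
Proof.
apply/matrixP => i j.
case: (mxtens_indexP i) => i1 i2; case: (mxtens_indexP j) => j1 j2.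
rewrite tensmxE !mxE (inj_eq (@mxtens_index_inj a b)) -natrM xpair_eqE.
by case: (i1 == j1); case: (i2 == j2).
Qed.

Lemma tensmx_suml m n p q I (r : seq I) (P : pred I) (F : I -> 'M[C]_(m, n))
  (B : 'M[C]_(p, q)) :
  (\sum_(i <- r | P i) F i) *t B = \sum_(i <- r | P i) (F i *t B).
Proof.
apply/matrixP => i j; rewrite !mxE !summxE mulr_suml.
by apply: eq_bigr => k _; rewrite !mxE.
Qed.

Lemma tensmx_sumr m n p q I (r : seq I) (P : pred I) (F : I -> 'M[C]_(p, q))
  (A : 'M[C]_(m, n)) :
  A *t (\sum_(i <- r | P i) F i) = \sum_(i <- r | P i) (A *t F i).
Proof.
apply/matrixP => i j; rewrite !mxE !summxE mulr_sumr.
by apply: eq_bigr => k _; rewrite !mxE.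
Qed.

Lemma mxtrace_tens m n (A : 'M[C]_m) (B : 'M[C]_n) :
  \tr (A *t B) = \tr A * \tr B.
Proof.
rewrite /mxtrace sum_tens mulr_suml; apply: eq_bigr => i _.
by rewrite mulr_sumr; apply: eq_bigr => k _; rewrite tensmxE.
Qed.


Lemma trace_conj_sum n p I (r : seq I) (B : I -> 'M[C]_(p, n)) (X : 'M[C]_n) :
  \sum_(j <- r) (adj (B j) *m B j) = 1%:M ->
  \sum_(j <- r) \tr (B j *m X *m adj (B j)) = \tr X.
Proof.
move=> h.
transitivity (\tr ((\sum_(j <- r) (adj (B j) *m B j)) *m X)); last first.
  by rewrite h mul1mx.
rewrite mulmx_suml raddf_sum; apply: eq_bigr => j _.
by rewrite mxtrace_mulC mulmxA.
Qed.

Lemma LOCC_inv a b a' b' (L : 'M[C]_(a * b) -> 'M[C]_(a' * b')) :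
  LOCC L -> forall X, psd X -> psd (L X) /\ \tr (L X) = \tr X.
Proof.
elim => {a b a' b' L}.
- by move=> a b X hX.
- move=> a b a0 a' b' n K L hK _ IH X hX; split.
    by apply: psd_sum => j _; apply: (IH j _ (psd_conj _ hX)).1.
  rewrite raddf_sum /=.
  under eq_bigr => j _ do rewrite (IH j _ (psd_conj _ hX)).2.
  apply: trace_conj_sum.
  under eq_bigr => j _ do rewrite adjT adj1 tensmx_mul mul1mx.
  by rewrite -tensmx_suml hK tens11.
- move=> a b b0 a' b' n K L hK _ IH X hX; split.
    by apply: psd_sum => j _; apply: (IH j _ (psd_conj _ hX)).1.
  rewrite raddf_sum /=.
  under eq_bigr => j _ do rewrite (IH j _ (psd_conj _ hX)).2.
  apply: trace_conj_sum.
  under eq_bigr => j _ do rewrite adjT adj1 tensmx_mul mul1mx.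
  by rewrite -tensmx_sumr hK tens11.
Qed.


Definition qf n (X : 'M[C]_n) (u : 'cV[C]_n) := (adj u *m X *m u) 0 0.

Lemma bfE n (X : 'M[C]_n) (u v : 'cV[C]_n) :
  (adj u *m X *m v) 0 0 = \sum_i \sum_j conjc (u i 0) * X i j * v j 0.
Proof.
rewrite mxE exchange_big /=; apply: eq_bigr => j _.
rewrite mxE mulr_suml; apply: eq_bigr => i _.
by rewrite !mxE.
Qed.

Lemma qfE n (X : 'M[C]_n) (u : 'cV[C]_n) :
  qf X u = \sum_i \sum_j conjc (u i 0) * X i j * u j 0.
Proof. exact: bfE. Qed.

Lemma qf_par n (X : 'M[C]_n) (u v : 'cV[C]_n) :
  qf X (u + v) + qf X (u - v) = 2 * qf X u + 2 * qf X v.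
Proof.
rewrite !qfE !mulr_sumr -!big_split; apply: eq_bigr => i _.
rewrite !mulr_sumr -!big_split; apply: eq_bigr => j _ /=.
rewrite !mxE rmorphD rmorphB /=; ring.
Qed.

Lemma qf_ge0 n (X : 'M[C]_n) u : psd X -> 0 <= qf X u.
Proof. by move=> h; apply: h. Qed.

Lemma qfD_le n (X : 'M[C]_n) (u v : 'cV[C]_n) : psd X ->
  qf X (u + v) <= 2 * qf X u + 2 * qf X v.
Proof.
move=> hX; rewrite -qf_par lerDl; exact: qf_ge0.
Qed.

Lemma qf0 n (X : 'M[C]_n) : qf X 0 = 0.
Proof. by rewrite /qf mulmx0 mxE. Qed.

Lemma qf_sum_le n (X : 'M[C]_n) : psd X -> forall k (g : 'I_k -> 'cV[C]_n),
  qf X (\sum_(m < k) g m) <= 2 ^+ k * \sum_(m < k) qf X (g m).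
Proof.
move=> hX; elim => [|k IH] g.
  by rewrite !big_ord0 qf0 mulr0.
rewrite !big_ord_recl; apply: (le_trans (qfD_le _ _ hX)).
rewrite mulrDr lerD //.
  rewrite ler_wpM2r ?qf_ge0 // exprS ler_peMr // ?exprn_ege1 //; idtac.
  by rewrite ler1n.
rewrite exprS -mulrA ler_wpM2l ?ler0n //; exact: IH.
Qed.

Lemma qf_delta n (X : 'M[C]_n) (c : C) m :
  qf X (c *: delta_mx m 0) = conjc c * c * X m m.
Proof.
rewrite qfE (bigD1 m) //= [s in _ + s]big1 ?addr0; last first.
  move=> i /negbTE hi.
  apply: big1 => j _; rewrite !mxE.
  by case: eqP => [e|_]; [move: hi; rewrite e eqxx | rewrite /= mulr0 rmorph0 !mul0r].
rewrite (bigD1 m) //= [s in _ + s]big1 ?addr0; last first.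
  move=> j hj; rewrite !mxE !eqxx /= ?andbT.
  by case: eqP => [e|_]; [move: hj; rewrite e eqxx | rewrite /= !mulr0].
by rewrite !mxE !eqxx /= !mulr1 mulrAC.
Qed.

Lemma qf_bound n (X : 'M[C]_n) (phi : 'cV[C]_n) : psd X ->
  (forall m, conjc (phi m 0) * phi m 0 <= 1) -> qf X phi <= 2 ^+ n * \tr X.
Proof.
move=> hX hphi.
have -> : phi = \sum_(m < n) (phi m 0) *: delta_mx m 0.
  rewrite {1}(matrix_sum_delta phi); apply: eq_bigr => m _.
  by rewrite big_ord1.
apply: (le_trans (qf_sum_le hX _)); rewrite ler_wpM2l ?exprn_ge0 ?ler0n //.
rewrite /mxtrace; apply: ler_sum => m _; rewrite qf_delta.
have h0 : 0 <= X m m.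
  by have := qf_ge0 (1 *: delta_mx m 0) hX; rewrite qf_delta rmorph1 !mul1r.
by rewrite ler_piMl.
Qed.


Section Lin.
Variables (m n : nat) (Phi : 'M[C]_m -> 'M[C]_n).
Hypothesis hL : linear_map Phi.

Lemma lin0 : Phi 0 = 0.
Proof.
have h := hL 1 0 0; rewrite !scale1r addr0 in h.
by apply: (addrI (Phi 0)); rewrite addr0 -h.
Qed.

Lemma linD X Y : Phi (X + Y) = Phi X + Phi Y.
Proof. by have := hL 1 X Y; rewrite !scale1r. Qed.

Lemma linZ c X : Phi (c *: X) = c *: Phi X.
Proof. by have := hL c X 0; rewrite !addr0 lin0 addr0. Qed.

Lemma lin_sum I (r : seq I) (P : pred I) (F : I -> 'M[C]_m) :
  Phi (\sum_(i <- r | P i) F i) = \sum_(i <- r | P i) Phi (F i).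
Proof. exact: (big_morph Phi linD lin0). Qed.

End Lin.

Lemma sum_delta n (i : 'I_n) (F : 'I_n -> C) :
  \sum_(k < n) (i == k)%:R * F k = F i.
Proof.
rewrite (bigD1 i) //= eqxx mul1r [s in _ + s]big1 ?addr0 // => k hk.
by case: eqP => [e|_]; [move: hk; rewrite e eqxx | rewrite mul0r].
Qed.

Lemma id_tensE k m n (Phi : 'M[C]_m -> 'M[C]_n) (X : 'M[C]_(k * m)) i j a b :
  id_tens Phi X (mxtens_index (i, a)) (mxtens_index (j, b)) =
  Phi (block X i j) a b.
Proof.
rewrite /id_tens summxE.
under eq_bigr => i' _ do rewrite summxE.
under eq_bigr => i' _ do under eq_bigr => j' _ do
  rewrite tensmxE mxE -mulnb natrM -mulrA.
under eq_bigr => i' _ do rewrite -mulr_sumr.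
rewrite sum_delta.
by rewrite sum_delta.
Qed.


Definition sc d : C := ((Num.sqrt (d%:R : R))^-1)%:C.

Lemma phiplusE d i k : phiplus d (mxtens_index (i, k)) 0 = sc d * (i == k)%:R.
Proof.
rewrite /phiplus mxE summxE /sc; congr (_ * _).
have e1 : forall x y : 'I_1, (x == y) = true.
  by move=> x y; rewrite [x]ord1 [y]ord1 eqxx.
under eq_bigr => m _ do rewrite !mxE mxtens_indexK /= !e1 !andbT -natrM mulnb.
rewrite (bigD1 i) //= eqxx /= [s in _ + s]big1 ?addr0 ?(eq_sym k) // => m hm.
by case: eqP => [e|_]; [move: hm; rewrite e eqxx | ].
Qed.

Definition swapc d (chi : 'cV[C]_(d * d)) : 'cV[C]_(d * d) :=
  \col_m conjc (chi (mxtens_index ((@mxtens_unindex d d m).2, (@mxtens_unindex d d m).1)) 0).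

Lemma swapcE d (chi : 'cV[C]_(d * d)) i k :
  swapc chi (mxtens_index (i, k)) 0 = conjc (chi (mxtens_index (k, i)) 0).
Proof. by rewrite mxE mxtens_indexK. Qed.

Lemma qf4 a b (X : 'M[C]_(a * b)) u :
  qf X u = \sum_i \sum_k \sum_j \sum_l
    conjc (u (mxtens_index (i, k)) 0) * X (mxtens_index (i, k)) (mxtens_index (j, l))
      * u (mxtens_index (j, l)) 0.
Proof.
rewrite qfE sum_tens; apply: eq_bigr => i _; apply: eq_bigr => k _.
by rewrite sum_tens.
Qed.

Lemma outerE n (u v : 'cV[C]_n) p q : (u *m adj v) p q = u p 0 * conjc (v q 0).
Proof. by rewrite mxE big_ord1 !mxE. Qed.

Lemma phiplusJ d i k :
  conjc (phiplus d (mxtens_index (i, k)) 0) = sc d * (i == k)%:R.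
Proof. by rewrite phiplusE /sc; case: (i == k); [rewrite !mulr1 conjc_real | rewrite !mulr0 rmorph0]. Qed.

Lemma del4 n (F : 'I_n -> 'I_n -> 'I_n -> 'I_n -> C) :
  \sum_i \sum_k \sum_j \sum_l ((i == k)%:R * (j == l)%:R * F i k j l) =
  \sum_i \sum_j F i i j j.
Proof.
apply: eq_bigr => i _.
under eq_bigr => k _ do under eq_bigr => j _ do under eq_bigr => l _ do
  rewrite -mulrA.
under eq_bigr => k _ do under eq_bigr => j _ do rewrite -mulr_sumr.
under eq_bigr => k _ do rewrite -mulr_sumr.
rewrite sum_delta; apply: eq_bigr => j _.
by rewrite sum_delta.
Qed.

Lemma block_swap d (chi : 'cV[C]_(d * d)) i j :
  block (swapc chi *m adj (swapc chi)) i j =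
  \sum_k \sum_l (conjc (chi (mxtens_index (k, i)) 0) * chi (mxtens_index (l, j)) 0)
     *: delta_mx k l.
Proof.
rewrite {1}(matrix_sum_delta (block _ i j)); apply: eq_bigr => k _.
apply: eq_bigr => l _; congr (_ *: _).
by rewrite mxE outerE !swapcE conjcK.
Qed.

Lemma block_phiplus d i j :
  block (phiplus d *m adj (phiplus d)) i j = (sc d * sc d) *: delta_mx i j.
Proof.
apply/matrixP => k l.
rewrite [LHS]mxE outerE phiplusE phiplusJ [RHS]mxE [delta_mx _ _ _ _]mxE.
rewrite -mulnb natrM (eq_sym k) (eq_sym l); ring.
Qed.

Lemma core d (Lam : 'M[C]_d -> 'M[C]_d) (chi : 'cV[C]_(d * d)) :
  linear_map Lam ->
  qf (rho_of (swapc chi) Lam) (phiplus d) = qf (rho_of (phiplus d) Lam) chi.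
Proof.
move=> hL.
rewrite !qf4 /rho_of.
transitivity (\sum_i \sum_k \sum_j \sum_l ((i == k)%:R * (j == l)%:R *
   (sc d * sc d * Lam (block (swapc chi *m adj (swapc chi)) i j) k l))).
  apply: eq_bigr => i _; apply: eq_bigr => k _; apply: eq_bigr => j _.
  apply: eq_bigr => l _.
  by rewrite id_tensE phiplusJ phiplusE; ring.
rewrite del4.
under eq_bigr => i _ do under eq_bigr => j _ do
  rewrite block_swap (lin_sum hL) summxE mulr_sumr.
under eq_bigr => i _ do under eq_bigr => j _ do under eq_bigr => k _ do
  rewrite (lin_sum hL) summxE mulr_sumr.
under [RHS]eq_bigr => i _ do under eq_bigr => k _ do under eq_bigr => j _ do
  under eq_bigr => l _ do rewrite id_tensE block_phiplus (linZ hL) mxE.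
under eq_bigr => i _ do rewrite exchange_big /=.
under eq_bigr => i _ do under eq_bigr => k _ do rewrite exchange_big /=.
rewrite exchange_big /=.
apply: eq_bigr => a _; apply: eq_bigr => b _; apply: eq_bigr => c _.
apply: eq_bigr => e _.
rewrite (linZ hL) mxE; ring.
Qed.

Lemma normE n (u : 'cV[C]_n) : (adj u *m u) 0 0 = \sum_m conjc (u m 0) * u m 0.
Proof. by rewrite mxE; apply: eq_bigr => m _; rewrite !mxE. Qed.

Lemma unit_swapc d (chi : 'cV[C]_(d * d)) :
  unit_vector chi -> unit_vector (swapc chi).
Proof.
rewrite /unit_vector !normE !sum_tens exchange_big /= => <-.
apply: eq_bigr => i _; apply: eq_bigr => k _.
by rewrite swapcE conjcK mulrC.
Qed.

Lemma trace_delta n (i j : 'I_n) : \tr (delta_mx i j : 'M[C]_n) = (i == j)%:R.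
Proof.
rewrite /mxtrace (bigD1 i) //= mxE eqxx /= [s in _ + s]big1 ?addr0 //.
move=> k hk; rewrite mxE.
by case: eqP => [e|_]; [move: hk; rewrite e eqxx | ].
Qed.

Lemma trace_id_tens k m (Phi : 'M[C]_m -> 'M[C]_m) (X : 'M[C]_(k * m)) :
  trace_preserving Phi -> \tr (id_tens Phi X) = \tr X.
Proof.
move=> hT; rewrite /id_tens raddf_sum /=.
under eq_bigr => i _ do rewrite raddf_sum /=.
under eq_bigr => i _ do under eq_bigr => j _ do rewrite mxtrace_tens trace_delta.
under eq_bigr => i _ do rewrite sum_delta hT.
by rewrite [in RHS]/mxtrace sum_tens; apply: eq_bigr => i _; rewrite /mxtrace;
  apply: eq_bigr => a _; rewrite mxE.
Qed.

Lemma rho_state d (Lam : 'M[C]_d -> 'M[C]_d) (psi : 'cV[C]_(d * d)) :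
  channel Lam -> unit_vector psi ->
  psd (rho_of psi Lam) /\ \tr (rho_of psi Lam) = 1.
Proof.
case=> hL hCP hTP hu; split.
  exact: hCP (psd_rank1 psi).
rewrite /rho_of trace_id_tens // mxtrace_mulC -hu.
by rewrite /mxtrace big_ord1.
Qed.

Lemma maxent_bound d (phi : 'cV[C]_(d * d)) :
  max_entangled phi -> forall m, conjc (phi m 0) * phi m 0 <= 1.
Proof.
move=> h m; case: (mxtens_indexP m) => i k.
have e := congr1 (fun M : 'M[C]_d => M i i) h; move: e => /=.
rewrite !mxE eqxx /= mulr1n => e.
have hd : (0 < d)%N := leq_ltn_trans (leq0n i) (ltn_ord i).
apply: (le_trans (y := (d%:R : C)^-1)); last first.
  by rewrite invf_le1 ?ltr0n // ler1n.
rewrite -e /mxtrace (bigD1 k) //= mxE outerE mulrC lerDl.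
by apply: sumr_ge0 => l _; rewrite mxE outerE; apply: mulcJ_ge0.
Qed.

Lemma sc2 d : (0 < d)%N -> sc d * sc d = (d%:R : C)^-1.
Proof.
move=> hd; rewrite /sc -rmorphM -expr2 exprVn sqr_sqrtr ?ler0n //.
by rewrite rmorphV ?rmorph_nat // unitfE pnatr_eq0 -lt0n.
Qed.

Lemma maxent_phiplus d : (0 < d)%N -> max_entangled (phiplus (R := R) d).
Proof.
move=> hd; rewrite /max_entangled; apply/matrixP => i j.
rewrite [LHS]mxE block_phiplus mxtraceZ trace_delta sc2 // [RHS]mxE.
by case: (i == j); rewrite ?mulr1 ?mulr0.
Qed.


Lemma qfZ n (X : 'M[C]_n) (c : C) u : qf X (c *: u) = conjc c * c * qf X u.
Proof.
by rewrite /qf adjZ -!scalemxAl -scalemxAr !mxE mulrA.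
Qed.

Lemma unit_qf n (u : 'cV[C]_n) : unit_vector u <-> qf 1%:M u = 1.
Proof. by rewrite /unit_vector /qf mulmx1. Qed.

Lemma psd_id n : psd (1%:M : 'M[C]_n).
Proof.
move=> v; rewrite mulmx1 normE; apply: sumr_ge0 => m _.
by rewrite mulrC; apply: mulcJ_ge0.
Qed.

Lemma eigen_unit n (A : 'M[C]_n) (x : R) :
  eigenvalue A (x%:C) -> exists chi, unit_vector chi /\ qf A chi = x%:C.
Proof.
case/eigenvalueP => v hv vn0.
set w := adj v.
have hq : qf A w = x%:C * qf 1%:M w.
  by rewrite /qf /w adjK hv mulmx1 -scalemxAl mxE.
set nv := qf 1%:M w.
have nv_ge0 : 0 <= nv by apply: qf_ge0; apply: psd_id.
have nv0 : nv != 0.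
  apply: contra vn0 => /eqP h0.
  have h1 : forall m, conjc (w m 0) * w m 0 = 0.
    move=> m; move: h0; rewrite /nv /qf mulmx1 normE => h0.
    by apply: (psumr_eq0P _ h0) => // l _; rewrite mulrC; apply: mulcJ_ge0.
  apply/eqP/matrixP => i m; rewrite (ord1 i) mxE.
  have := h1 m; move/eqP; rewrite mulf_eq0 conjc_eq0 orbb /w !mxE conjc_eq0.
  by move/eqP.
have enr : nv = (complex.Re nv)%:C by rewrite RRe_real // ger0_real.
set r := complex.Re nv in enr.
have r_gt0 : 0 < r.
  rewrite lt_def; apply/andP; split.
    by apply: contra nv0 => /eqP r0; rewrite enr r0.
  by rewrite -lecR -enr.
have cc : conjc ((Num.sqrt r)^-1)%:C * ((Num.sqrt r)^-1)%:C = (r^-1)%:C.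
  rewrite conjc_real -rmorphM -expr2 exprVn sqr_sqrtr //; exact: ltW.
exists (((Num.sqrt r)^-1)%:C *: w); split.
  by apply/unit_qf; rewrite qfZ cc -/nv enr -rmorphM mulVf // gt_eqF.
rewrite qfZ cc hq -/nv enr mulrCA -rmorphM mulVf ?gt_eqF //.
by rewrite mulr1.
Qed.


End Part1.

Section Final.
Variable R : realType.
Local Notation C := R[i].
Local Open Scope classical_set_scope.
Local Open Scope complex_scope.

Variables (d : nat) (Lam : 'M[C]_d -> 'M[C]_d).
Hypothesis hd : (2 <= d)%N.
Hypothesis hch : channel Lam.

Let d0 : (0 < d)%N. Proof. by apply: leq_trans hd. Qed.

Let B : R := 2 ^+ (d * d).

Lemma re_bound (L : 'M[C]_(d * d) -> 'M[C]_(d * d)) psi phi :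
  LOCC L -> unit_vector psi -> max_entangled phi ->
  complex.Re (qf (L (rho_of psi Lam)) phi) <= B.
Proof.
move=> hL hu hphi.
have [hp ht] := rho_state hch hu.
have [hp' ht'] := LOCC_inv hL hp.
have := qf_bound hp' (maxent_bound hphi).
rewrite ht' ht mulr1 (_ : (2 : C) ^+ (d * d) = (B%:C)); last first.
  by rewrite rmorphXn rmorph_nat.
by rewrite lecE => /andP[_].
Qed.

Lemma sf_has_sup (L : 'M[C]_(d * d) -> 'M[C]_(d * d)) psi :
  LOCC L -> unit_vector psi ->
  has_sup [set complex.Re ((adj phi *m L (rho_of psi Lam) *m phi) 0 0)
             | phi in @max_entangled R d].
Proof.
move=> hL hu; split.
  by exists (complex.Re (qf (L (rho_of psi Lam)) (phiplus d))), (phiplus d) => //;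
     apply: maxent_phiplus.
by exists B => y [phi hphi <-]; apply: re_bound.
Qed.

Lemma sf_le (L : 'M[C]_(d * d) -> 'M[C]_(d * d)) psi :
  LOCC L -> unit_vector psi -> singlet_fraction (L (rho_of psi Lam)) <= B.
Proof.
move=> hL hu; apply: ge_sup; first by case: (sf_has_sup hL hu).
by move=> y [phi hphi <-]; apply: re_bound.
Qed.

Lemma msf_has_sup psi : unit_vector psi ->
  has_sup [set singlet_fraction (L (rho_of psi Lam))
             | L in [set L | @LOCC R d d d d L]].
Proof.
move=> hu; split.
  by exists (singlet_fraction (rho_of psi Lam)), (fun X => X) => //; exact: LOCC_id.
by exists B => y [L hL <-]; apply: sf_le.
Qed.

Lemma msf_le psi : unit_vector psi -> max_singlet_fraction (rho_of psi Lam) <= B.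
Proof.
move=> hu; apply: ge_sup; first by case: (msf_has_sup hu).
by move=> y [L hL <-]; apply: sf_le.
Qed.

Lemma csf_ge psi : unit_vector psi ->
  complex.Re (qf (rho_of psi Lam) (phiplus d)) <= channel_singlet_fraction Lam.
Proof.
move=> hu.
apply: (le_trans (y := singlet_fraction (rho_of psi Lam))).
  apply: (sup_upper_bound (sf_has_sup (LOCC_id R d d) hu)).
  by exists (phiplus d) => //; apply: maxent_phiplus.
apply: (le_trans (y := max_singlet_fraction (rho_of psi Lam))).
  apply: (sup_upper_bound (msf_has_sup hu)).
  by exists (fun X => X) => //; exact: LOCC_id.
apply: sup_upper_bound.
  split; first by exists (max_singlet_fraction (rho_of psi Lam)), psi.
  by exists B => y [p hp <-]; apply: msf_le.
by exists psi.
Qed.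

Lemma mainG chi : unit_vector chi ->
  complex.Re (qf (rho_of (phiplus d) Lam) chi) <= channel_singlet_fraction Lam.
Proof.
move=> hu; rewrite -core; last by case: hch.
by apply: csf_ge; apply: unit_swapc.
Qed.

End Final.

Unset Implicit Arguments.

Theorem lemma2 (R : realType) (d : nat) (Lam : 'M[R[i]]_d -> 'M[R[i]]_d) :
  (2 <= d)%N -> channel Lam ->
  lambda_max (rho_of (phiplus d) Lam) <= channel_singlet_fraction Lam.
Proof.
move=> hd hch; rewrite /lambda_max.
match goal with |- context [reals.sup ?S] => set E := S end.
case: (pselect (E !=set0)%classic) => [ne | ne].
  apply: ge_sup ne _ => x /eigen_unit [chi [hu hq]].
  by have := mainG hd hch hu; rewrite hq.
have -> : E = set0%classic.
  by apply/seteqP; split => x // Ex; exfalso; apply: ne; exists x.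
rewrite sup0.
have hm : (0 < d * d)%N by rewrite muln_gt0 andbb; apply: leq_trans hd.
set e : 'cV[R[i]]_(d * d) := delta_mx (Ordinal hm) 0.
have hu : unit_vector e.
  apply/unit_qf; rewrite /e -(scale1r (delta_mx _ _)) qf_delta mxE eqxx.
  by rewrite rmorph1 !mul1r.
apply: le_trans (mainG hd hch hu).
case: hch => _ hCP _.
have := hCP _ _ (psd_rank1 (phiplus d)) e.
by rewrite lecE => /andP[_].
Qed.
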